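(* Let $S$ be a group or a 0-group. Then a right $S$-act $A_S$ is Rees artinian if and only if it is Rees noetherian.
   Context: A 0-group is a group with an externally adjoined zero element. An $S$-act is Rees artinian (Rees noetherian) if its subacts satisfy the descending (ascending) chain condition. *)

(* Defs.v *)
Definition is_group (S : Type) (mul : S -> S -> S) : Prop :=
  (forall x y z, mul x (mul y z) = mul (mul x y) z) /\
  exists e : S,
    (forall x, mul e x = x /\ mul x e = x) /\
    (forall x, exists y, mul x y = e /\ mul y x = e).

(* (S, mul) is a 0-group: a group G with an externally adjoined zero z,
   i.e. S = G ∪ {z}, z ∉ G, G is a group under mul, z is a two-sided zero. *)
Definition is_0group (S : Type) (mul : S -> S -> S) : Prop :=
  (forall x y z, mul x (mul y z) = mul (mul x y) z) /\
  exists z : S,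
    (forall x, mul z x = z /\ mul x z = z) /\
    (forall x y, x <> z -> y <> z -> mul x y <> z) /\
    exists e : S, e <> z /\
      (forall x, mul e x = x /\ mul x e = x) /\
      (forall x, x <> z -> exists y, y <> z /\ mul x y = e /\ mul y x = e).

Definition is_right_act (S A : Type) (mul : S -> S -> S) (act : A -> S -> A) : Prop :=
  forall a s t, act (act a s) t = act a (mul s t).

Definition is_subact (S A : Type) (act : A -> S -> A) (B : A -> Prop) : Prop :=
  forall a s, B a -> B (act a s).

Definition set_sub (A : Type) (B C : A -> Prop) : Prop := forall a, B a -> C a.
Definition set_eq (A : Type) (B C : A -> Prop) : Prop := forall a, B a <-> C a.

Definition rees_artinian (S A : Type) (act : A -> S -> A) : Prop :=
  forall B : nat -> A -> Prop,
    (forall n, is_subact S A act (B n)) ->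
    (forall n, set_sub A (B (Datatypes.S n)) (B n)) ->
    exists n, forall m, n <= m -> set_eq A (B m) (B n).

Definition rees_noetherian (S A : Type) (act : A -> S -> A) : Prop :=
  forall B : nat -> A -> Prop,
    (forall n, is_subact S A act (B n)) ->
    (forall n, set_sub A (B n) (B (Datatypes.S n))) ->
    exists n, forall m, n <= m -> set_eq A (B m) (B n).

(* Main.v *)
Require Import Defs.
From Stdlib Require Import Classical Lia PeanoNat.

Section Generic.
Variables (S A : Type) (act : A -> S -> A).
Variables (F1 F2 F3 : (A -> Prop) -> (A -> Prop)).
Hypothesis Fsub : forall P, is_subact S A act P ->
  is_subact S A act (F1 P) /\ is_subact S A act (F2 P) /\ is_subact S A act (F3 P).
Hypothesis Fanti : forall P Q : A -> Prop, set_sub A P Q ->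
  set_sub A (F1 Q) (F1 P) /\ set_sub A (F2 Q) (F2 P) /\ set_sub A (F3 Q) (F3 P).
Hypothesis core : forall P Q, is_subact S A act P -> is_subact S A act Q ->
  set_eq A (F1 P) (F1 Q) -> set_eq A (F2 P) (F2 Q) -> set_eq A (F3 P) (F3 Q) ->
  set_sub A P Q.

Lemma core_eq P Q : is_subact S A act P -> is_subact S A act Q ->
  set_eq A (F1 P) (F1 Q) -> set_eq A (F2 P) (F2 Q) -> set_eq A (F3 P) (F3 Q) ->
  set_eq A P Q.
Proof.
  intros HP HQ E1 E2 E3 a; split; [apply (core P Q)|apply (core Q P)]; auto;
  intro b; [rewrite (E1 b)|rewrite (E2 b)|rewrite (E3 b)]; tauto.
Qed.

Lemma stab_combine (B : nat -> A -> Prop) N1 N2 N3 :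
  (forall n, is_subact S A act (B n)) ->
  (forall m, N1 <= m -> set_eq A (F1 (B m)) (F1 (B N1))) ->
  (forall m, N2 <= m -> set_eq A (F2 (B m)) (F2 (B N2))) ->
  (forall m, N3 <= m -> set_eq A (F3 (B m)) (F3 (B N3))) ->
  exists n, forall m, n <= m -> set_eq A (B m) (B n).
Proof.
  intros Hs H1 H2 H3. exists (Nat.max N1 (Nat.max N2 N3)). intros m Hm.
  apply core_eq; auto; intro a.
  - pose proof (H1 m ltac:(lia) a). pose proof (H1 (Nat.max N1 (Nat.max N2 N3)) ltac:(lia) a). tauto.
  - pose proof (H2 m ltac:(lia) a). pose proof (H2 (Nat.max N1 (Nat.max N2 N3)) ltac:(lia) a). tauto.
  - pose proof (H3 m ltac:(lia) a). pose proof (H3 (Nat.max N1 (Nat.max N2 N3)) ltac:(lia) a). tauto.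
Qed.

Lemma generic_equiv : rees_artinian S A act <-> rees_noetherian S A act.
Proof.
  split.
  - intros HA B Hs Hinc.
    destruct (HA (fun n => F1 (B n))) as [N1 H1];
      [intro n; apply Fsub; auto | intro n; apply Fanti; auto |].
    destruct (HA (fun n => F2 (B n))) as [N2 H2];
      [intro n; apply Fsub; auto | intro n; apply Fanti; auto |].
    destruct (HA (fun n => F3 (B n))) as [N3 H3];
      [intro n; apply Fsub; auto | intro n; apply Fanti; auto |].
    exact (stab_combine B N1 N2 N3 Hs H1 H2 H3).
  - intros HN B Hs Hinc.
    destruct (HN (fun n => F1 (B n))) as [N1 H1];
      [intro n; apply Fsub; auto | intro n; apply Fanti; auto |].
    destruct (HN (fun n => F2 (B n))) as [N2 H2];
      [intro n; apply Fsub; auto | intro n; apply Fanti; auto |].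
    destruct (HN (fun n => F3 (B n))) as [N3 H3];
      [intro n; apply Fsub; auto | intro n; apply Fanti; auto |].
    exact (stab_combine B N1 N2 N3 Hs H1 H2 H3).
Qed.
End Generic.

Definition Vf (S A : Type) (act : A -> S -> A) (P : A -> Prop) : A -> Prop :=
  fun a => ~ P a \/ exists b t, a = act b t.

Lemma group_case (S A : Type) (mul : S -> S -> S) (act : A -> S -> A) :
  is_group S mul -> is_right_act S A mul act ->
  (rees_artinian S A act <-> rees_noetherian S A act).
Proof.
  intros [Hass [e [He Hinv]]] Hact.
  set (U := fun (P : A -> Prop) a => forall s, ~ P (act a s)).
  apply (generic_equiv S A act U (Vf S A act) U).
  - intros P HP. assert (is_subact S A act (U P)).
    { intros a t Ha s. rewrite Hact. apply Ha. }
    split; [auto|split; [|auto]].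
    intros a t Ha. right. eauto.
  - intros P Q HPQ. assert (set_sub A (U Q) (U P)).
    { intros a Ha s Hp. apply (Ha s), HPQ, Hp. }
    split; [auto|split; [|auto]].
    intros a [Ha|Ha]; [left; intro; apply Ha, HPQ; auto | right; auto].
  - intros P Q HP HQ E1 E2 _ x Px.
    destruct (classic (exists b t, x = act b t)) as [[b [t Hx]]|Hn].
    + assert (Hxe : act x e = x).
      { rewrite Hx, Hact. f_equal. apply He. }
      destruct (classic (exists s, Q (act x s))) as [[s Hs]|Hn].
      * destruct (Hinv s) as [s' [Hss' _]].
        rewrite <- Hxe, <- Hss', <- Hact. apply HQ, Hs.
      * assert (U Q x) by (intros s Hs; apply Hn; eauto).
        apply E1 in H. exfalso. apply (H e). apply HP, Px.
    + destruct (classic (Q x)) as [|HnQ]; auto.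
      assert (Vf S A act Q x) by (left; auto).
      apply E2 in H. destruct H as [H|H]; contradiction.
Qed.

Lemma zgroup_case (S A : Type) (mul : S -> S -> S) (act : A -> S -> A) :
  is_0group S mul -> is_right_act S A mul act ->
  (rees_artinian S A act <-> rees_noetherian S A act).
Proof.
  intros [Hass [z [Hz [Hnz [e [Hez [He Hinv]]]]]]] Hact.
  set (U := fun (P : A -> Prop) a => forall s, P (act a s) -> act a s = act a z).
  set (Z := fun (P : A -> Prop) a => ~ P (act a z)).
  apply (generic_equiv S A act U (Vf S A act) Z).
  - intros P HP. split; [|split].
    + intros a t Ha s Hs. rewrite !Hact in *. rewrite (proj2 (Hz t)).
      apply Ha, Hs.
    + intros a t Ha. right. eauto.
    + intros a t Ha. unfold Z in *. rewrite Hact, (proj2 (Hz t)). exact Ha.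
  - intros P Q HPQ. split; [|split].
    + intros a Ha s Hp. apply Ha, HPQ, Hp.
    + intros a [Ha|Ha]; [left; intro; apply Ha, HPQ; auto | right; auto].
    + intros a Ha Hp. apply Ha, HPQ, Hp.
  - intros P Q HP HQ E1 E2 E3 x Px.
    destruct (classic (exists b t, x = act b t)) as [[b [t Hx]]|Hn].
    + assert (Hxe : act x e = x).
      { rewrite Hx, Hact. f_equal. apply He. }
      destruct (classic (exists s, Q (act x s) /\ act x s <> act x z)) as [[s [Hs Hsz]]|Hn].
      * assert (s <> z) by (intro; subst; auto).
        destruct (Hinv s H) as [s' [_ [Hss' _]]].
        rewrite <- Hxe, <- Hss', <- Hact. apply HQ, Hs.
      * assert (U Q x).
        { intros s Hs. apply NNPP. intro. apply Hn. eauto. }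
        apply E1 in H. specialize (H e (HP _ _ Px)).
        rewrite Hxe in H.
        destruct (classic (Q (act x z))) as [Hq|Hq].
        -- rewrite H. exact Hq.
        -- apply E3 in Hq. exfalso. apply Hq, HP, Px.
    + destruct (classic (Q x)) as [|HnQ]; auto.
      assert (Vf S A act Q x) by (left; auto).
      apply E2 in H. destruct H as [H|H]; contradiction.
Qed.

Theorem mainTheorem15 (S A : Type) (mul : S -> S -> S) (act : A -> S -> A) :
  (is_group S mul \/ is_0group S mul) ->
  is_right_act S A mul act ->
  (rees_artinian S A act <-> rees_noetherian S A act).
Proof.
  intros [H|H] Ha; [apply (group_case S A mul)|apply (zgroup_case S A mul)]; auto.
Qed.
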